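(* Let $k\ge 1$ and let $G$ be a minimally $k$-connected graph with $n$ vertices and maximum degree $\Delta$. Then $$|V_k|\;\ge\;\frac{(k-1)n+2\,(c_F+|E_k|)+\max\{0,\Delta-(k+1)\}}{2k-1}.$$
   Context: All graphs are finite, simple and undirected. A $k$-separator is a set of $k\ge 0$ vertices whose deletion leaves a disconnected graph. A graph is $k$-connected if it has more than $k$ vertices and contains no $(k-1)$-separator. A $k$-connected graph $G$ is minimally $k$-connected if $G-e$ is not $k$-connected for every edge $e$. For a graph $G$: $V_k$ is the set of vertices of degree exactly $k$; $E_k$ is the set of edges of $G$ with both end vertices in $V_k$; $F:=G-V_k$ is the graph obtained by deleting $V_k$; and $c_F$ is the number of connected components of $F$. *)

(* Defs.v *)
(* A finite simple graph on vertex type T is a symmetric,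
   irreflexive relation e : rel T; its vertex set is all of T. *)
From HB Require Import structures.
From mathcomp Require Import all_boot all_order all_algebra.
Set Implicit Arguments. Unset Strict Implicit. Unset Printing Implicit Defensive.
Import Order.TTheory GRing.Theory Num.Theory.

Section Graphs.
Variable T : finType.

Definition simple_graph (e : rel T) : Prop := symmetric e /\ irreflexive e.

Definition del_vertices (e : rel T) (S : {set T}) : rel T :=
  [rel x y | [&& x \notin S, y \notin S & e x y]].

Definition connected_after (e : rel T) (S : {set T}) : Prop :=
  forall x y, x \notin S -> y \notin S -> connect (del_vertices e S) x y.

Definition separator (e : rel T) (k : nat) (S : {set T}) : Prop :=
  #|S| = k /\ ~ connected_after e S.

Definition k_connected (e : rel T) (k : nat) : Prop :=
  k < #|T| /\ forall S : {set T}, ~ separator e k.-1 S.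

Definition del_edge (e : rel T) (u v : T) : rel T :=
  [rel x y | e x y && ~~ (((x == u) && (y == v)) || ((x == v) && (y == u)))].

Definition minimally_k_connected (e : rel T) (k : nat) : Prop :=
  k_connected e k /\ forall u v, e u v -> ~ k_connected (del_edge e u v) k.

Definition deg (e : rel T) (v : T) : nat := #|[set u | e v u]|.

Definition max_deg (e : rel T) : nat := \max_(v : T) deg e v.

Definition Vdeg (e : rel T) (k : nat) : {set T} := [set v | deg e v == k].

Definition Edeg (e : rel T) (k : nat) : {set {set T}} :=
  [set p : {set T} | [exists u, exists v,
     [&& u \in Vdeg e k, v \in Vdeg e k, e u v & p == [set u; v]]]].

(* c_F : number of connected components of F = G - V_k, counted as the
   number of distinct vertex sets of components *)
Definition num_components (e : rel T) (S : {set T}) : nat :=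
  #|[set C : {set T} | [exists x, (x \notin S) &&
       (C == [set y | connect (del_vertices e S) x y])]]|.

End Graphs.

(* Main.v *)
Require Import Defs.
From HB Require Import structures.
From mathcomp Require Import all_boot all_order all_algebra.
Import Order.TTheory GRing.Theory Num.Theory.
From mathcomp Require Import zify.
From Stdlib Require Import Classical_Prop.
Set Implicit Arguments. Unset Strict Implicit. Unset Printing Implicit Defensive.


Lemma connect_closed_sub (T : finType) (r : rel T) (R : {set T}) x y :
  (forall a b, r a b -> a \in R -> b \in R) -> x \in R -> connect r x y -> y \in R.
Proof.
move=> H xR /connectP [p pth ->]; elim: p x xR pth => [|a p IH] x xR //= /andP [rxa pth].
exact: IH (H _ _ rxa xR) pth.
Qed.

Lemma card_setU_le (T : finType) (A B : {set T}) : #|A :|: B| <= #|A| + #|B|.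
Proof. by rewrite cardsU leq_subr. Qed.

Lemma exists_sub_card (T : finType) (P : {set T}) m :
  m <= #|P| -> exists Q : {set T}, Q \subset P /\ #|Q| = m.
Proof.
move=> mP; exists [set x in take m (enum P)]; split.
  by apply/subsetP => x; rewrite inE => /mem_take; rewrite mem_enum.
rewrite cardsE (card_uniqP _); last by rewrite take_uniq // enum_uniq.
by rewrite size_take -cardE; case: ltngtP mP => // ->.
Qed.

Lemma kc_bound (T : finType) (e : rel T) k (R N : {set T}) w z :
  k_connected e k -> w \in R -> z \notin R -> z \notin N ->
  (forall a b, a \in R -> b \notin R -> e a b -> b \in N) -> k <= #|N|.
Proof.
move=> [kn nosep] wR zR zN Hed.
rewrite leqNgt; apply/negP => Nk.
set N0 := N :\: R.
have N0N : #|N0| <= #|N| by rewrite subset_leq_card // subsetDl.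
set P := ~: (N0 :|: [set w; z]).
have cP : #|N0| + 2 + #|P| >= #|T|.
  rewrite -(cardsC (N0 :|: [set w; z])) leq_add2r.
  by apply: (leq_trans (card_setU_le _ _)); rewrite leq_add2l cards2; case: (w != z).
have [Q [QP cQ]] : exists Q : {set T}, Q \subset P /\ #|Q| = k.-1 - #|N0|.
  by apply: exists_sub_card; move: cP; lia.
apply: (nosep (N0 :|: Q)); split.
  rewrite cardsU cQ.
  have -> : N0 :&: Q = set0.
    apply/setP => v; rewrite !inE; apply/negP => /andP [vN vQ].
    by move/subsetP: QP => /(_ v vQ); rewrite !inE vN.
  rewrite cards0; lia.
move=> Hc.
have wS : w \notin N0 :|: Q.
  rewrite !inE wR /=; apply/negP => wQ.
  by move/subsetP: QP => /(_ w wQ); rewrite !inE eqxx orbT.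
have zS : z \notin N0 :|: Q.
  rewrite !inE (negbTE zN) andbF /=; apply/negP => zQ.
  by move/subsetP: QP => /(_ z zQ); rewrite !inE eqxx !orbT.
suff : z \in R by rewrite (negbTE zR).
apply: (connect_closed_sub _ wR (Hc w z wS zS)).
move=> a b /= /and3P [aS bS eab] aR.
apply/negPn/negP => bR.
have : b \in N0 by rewrite inE bR (Hed a b aR bR eab).
by move: bS; rewrite inE => /norP [/negbTE ->].
Qed.


Definition sidep (T : finType) (e : rel T) k (x y : T) (A S : {set T}) : Prop :=
  [/\ x \in A, y \notin A, y \notin S, #|S| <= k.-1 &
   forall a b, a \in A -> b \notin A -> e a b -> b \in S \/ (a = x /\ b = y)].

Lemma sym_dv (T : finType) (e : rel T) S : symmetric e -> symmetric (del_vertices e S).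
Proof. by move=> se a b; rewrite /del_vertices /= (se a b) andbCA. Qed.

Lemma sym_de (T : finType) (e : rel T) x y : symmetric e -> symmetric (del_edge e x y).
Proof.
move=> se a b; rewrite /del_edge /= (se a b); case: (e b a) => //=.
by rewrite orbC (andbC (b == x)) (andbC (b == y)).
Qed.

Lemma side_exists (T : finType) (e : rel T) k x y :
  simple_graph e -> minimally_k_connected e k -> e x y ->
  exists A S, sidep e k x y A S.
Proof.
move=> [se ie] [[kn nosep] Hmin] exy.
apply: NNPP => Hno; apply: (Hmin x y exy); split => // S [cS Hdis].
apply: Hdis => a b aS bS.
set r := del_vertices (del_edge e x y) S.
have c0 : connect (del_vertices e S) a b.
  apply: NNPP => nc; apply: (nosep S); split => // Hc.
  by apply: nc; apply: Hc.
have symr : connect_sym r by apply/sym_connect_sym/sym_dv/sym_de.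
have Hxy : x \notin S -> y \notin S -> connect r x y.
  move=> xS yS; case: (boolP (connect r x y)) => // nc; exfalso; apply: Hno.
  exists [set v | connect r x v], S; split => //.
  - by rewrite inE connect0.
  - by rewrite inE.
  - by rewrite cS.
  move=> c d; rewrite !inE => cA dA ecd.
  case: (boolP (d \in S)) => [|dS]; first by left.
  case: (boolP ((c == x) && (d == y))) => [/andP [/eqP -> /eqP ->]|ncd]; first by right.
  exfalso; move/negP: dA; apply; apply: (connect_trans cA); apply: connect1.
  have cS' : c \notin S.
    have : c \in ~: S.
      have xS' : x \in ~: S by rewrite inE.
      apply: (connect_closed_sub _ xS' cA).
      by move=> u v /and3P [_ vS _] _; rewrite inE.
    by rewrite inE.
  apply/and3P; split => //; apply/andP; split => //; rewrite negb_or ncd /=.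
  by apply/negP => /andP [/eqP cy _]; move: nc; rewrite -cy cA.
apply: (connect_sub _ c0) => c d /and3P [cS' dS ecd].
case: (boolP ((c == x) && (d == y) || (c == y) && (d == x))) => [|H].
  case/orP => /andP [/eqP cx /eqP dy]; subst c d; first exact: Hxy.
  by rewrite symr; apply: Hxy.
by apply: connect1; apply/and3P; split => //; apply/andP.
Qed.


Lemma side_nbA (T : finType) (e : rel T) k x y A S a b :
  sidep e k x y A S -> a \in A -> e a b -> b \notin A -> b \notin S -> a = x /\ b = y.
Proof. by case=> _ _ _ _ ed aA eab bA bS; case: (ed a b aA bA eab) => //; rewrite (negbTE bS). Qed.

Lemma side_nbB (T : finType) (e : rel T) k x y A S a b :
  symmetric e -> sidep e k x y A S -> a \notin A -> a \notin S -> e a b -> b \in A ->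
  a = y /\ b = x.
Proof.
move=> se [_ _ _ _ ed] aA aS eab bA; rewrite se in eab.
by case: (ed b a bA aA eab) => [|[-> ->]] //; rewrite (negbTE aS).
Qed.

Lemma side_flip (T : finType) (e : rel T) k x y (A S : {set T}) :
  symmetric e -> x \notin S -> sidep e k x y A S -> sidep e k y x (~: (A :|: S)) S.
Proof.
move=> se xS sA; have [xA yA yS cS ed] := sA; split => //.
- by rewrite !inE negb_or yA.
- by rewrite !inE xA.
move=> a b; rewrite !inE negb_or negbK => /andP [aA aS] bAS eab.
case/orP: bAS => [bA|bS]; last by left.
by have [-> ->] := side_nbB se sA aA aS eab bA; right.
Qed.

Lemma side_norm (T : finType) (e : rel T) k x y A S :
  sidep e k x y A S -> sidep e k x y A (S :\: A).
Proof.
case=> xA yA yS cS ed; split => //.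
- by rewrite inE negb_and yS orbT.
- by apply: leq_trans cS; rewrite subset_leq_card // subsetDl.
move=> a b aA bA eab; case: (ed a b aA bA eab) => [bS|]; last by right.
by left; rewrite inE bA.
Qed.

Lemma side_exists_norm (T : finType) (e : rel T) k x y :
  simple_graph e -> minimally_k_connected e k -> e x y ->
  exists A S, sidep e k x y A S /\ (forall w, w \in A -> w \notin S).
Proof.
move=> sg mk exy; have [A [S sA]] := side_exists sg mk exy.
by exists A, (S :\: A); split; [exact: side_norm | move=> w wA; rewrite inE wA].
Qed.

Lemma part3 (T : finType) (X P Q : {set T}) : (forall v, v \in P -> v \notin Q) ->
  #|X| = #|X :&: P| + #|X :&: Q| + #|X :&: ~: (P :|: Q)|.
Proof.
move=> dPQ; rewrite -(cardsID P X) -addnA; congr (_ + _).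
rewrite -(cardsID Q (X :\: P)).
have -> : (X :\: P) :&: Q = X :&: Q.
  apply/setP => v; rewrite !inE.
  by case: (boolP (v \in P)) => vP //=; rewrite (negbTE (dPQ v vP)) !andbF.
have -> // : X :\: P :\: Q = X :&: ~: (P :|: Q).
apply/setP => v; rewrite !inE negb_or.
by case: (v \in P); case: (v \in Q); case: (v \in X).
Qed.

Lemma card3 (T : finType) (X Y Z : {set T}) : #|X :|: Y :|: Z| <= #|X| + #|Y| + #|Z|.
Proof. by apply: leq_trans (card_setU_le _ _) _; rewrite leq_add2r card_setU_le. Qed.

Lemma card4 (T : finType) (X Y Z V : {set T}) : #|X :|: Y :|: Z :|: V| <= #|X| + #|Y| + #|Z| + #|V|.
Proof. by apply: leq_trans (card_setU_le _ _) _; rewrite leq_add2r card3. Qed.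

Lemma arith1 N I D U s k : I + D = N -> I <= U -> U <= s + 1 -> s <= k.-1 -> k < N -> 0 < k -> 0 < D.
Proof. lia. Qed.

Lemma arith_final k su st sw xt au aw bu bt bw a s b t w :
 0 < k -> s <= k.-1 -> t <= k.-1 ->
 a = au + xt + aw -> s = su + st + sw -> b = bu + bt + bw -> t = xt + st + bt -> w = aw + sw + bw ->
 a <= b -> a <= w -> 0 < au ->
 k <= su + xt + st + 1 ->
 (0 < bw -> k <= sw + bt + st) ->
 (0 < aw -> k <= sw + xt + st) ->
 (0 < bu -> k <= su + bt + st + 1) ->
 (aw = 0 -> 0 < sw) -> False.
Proof.
move=> k0 hs ht ha hs' hb ht' hw ab aw' au1 G2 C1 C3 C4 Z.
case: (posnP bw) => [bw0|bw1]; last by have := C1 bw1; lia.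
case: (posnP aw) => [aw0|aw1]; first by have := Z aw0; lia.
have := C3 aw1; case: (posnP bu) => [bu0|bu1]; first lia.
have := C4 bu1; lia.
Qed.

Lemma mader_core (T : finType) (e : rel T) k (K : {set T}) x y (A S : {set T}) :
  simple_graph e -> 0 < k -> k_connected e k ->
  (forall u v, e u v -> exists U T', sidep e k u v U T' /\ (forall w, w \in U -> w \notin T')) ->
  (forall v, v \in K -> k < deg e v) ->
  (forall v, v \in K -> 1 < #|[set u in K | e v u]|) ->
  (forall x' y' A' S', x' \in K -> y' \in K -> e x' y' -> sidep e k x' y' A' S' -> #|A| <= #|A'|) ->
  x \in K -> y \in K -> e x y -> sidep e k x y A S -> (forall w, w \in A -> w \notin S) -> False.
Proof.
move=> [se ie] k0 kcon hside degK nbK min xK yK exy sA dAS.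
have [xA yA yS cS edA] := sA.
have [z /and3P [zK exz zy]] : exists z, [&& z \in K, e x z & z != y].
  have := nbK x xK; rewrite (cardsD1 y) => H.
  have : 0 < #|[set u in K | e x u] :\ y| by move: H; case: (y \in _) => /=; lia.
  rewrite card_gt0 => /set0Pn [z]; rewrite !inE => /andP [zy /andP [zK exz]].
  by exists z; rewrite zK exz zy.
have [U [T' [sU dUT]]] := hside x z exz.
have [xU zU zT cT edU] := sU.
have xS : x \notin S by apply: dAS.
have xT : x \notin T' by apply: dUT.
have FAB : #|A| <= #|~: (A :|: S)|.
  by apply: (min y x _ S yK xK); [rewrite se | exact: side_flip].
have FAW : #|A| <= #|~: (U :|: T')|.
  by apply: (min z x _ T' zK xK); [rewrite se | exact: side_flip].
set B := ~: (A :|: S) in FAB *.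
set W := ~: (U :|: T') in FAW *.
have yB : y \in B by rewrite !inE negb_or yA yS.
have zW : z \in W by rewrite !inE negb_or zU zT.
have yUT : (y \in U) || (y \in T').
  apply/negPn/negP; rewrite negb_or => /andP [yU yT].
  by have [_ yz] := side_nbA sU xU exy yU yT; rewrite yz eqxx in zy.
have zAS : (z \in A) || (z \in S).
  apply/negPn/negP; rewrite negb_or => /andP [zA zS].
  by have [_ zy'] := side_nbA sA xA exz zA zS; rewrite zy' eqxx in zy.
have zx : z != x by apply/eqP => zx; rewrite zx ie in exz.
have [a0 a0A a0x] : exists2 a0, a0 \in A & a0 != x.
  have := degK x xK; rewrite /deg => dx.
  have : 0 < #|[set u | e x u] :\: (S :|: [set y])|.
    apply: (arith1 (cardsID (S :|: [set y]) [set u | e x u])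
      (subset_leq_card (subsetIr [set u | e x u] (S :|: [set y]))) _ cS dx k0).
    by have := card_setU_le S [set y]; rewrite cards1.
  rewrite card_gt0 => /set0Pn [u]; rewrite !inE negb_or => /andP [/andP [uS uy] exu].
  exists u; last by apply/eqP => ux; rewrite ux ie in exu.
  apply/negPn/negP => uA.
  by have [_ uy'] := side_nbA sA xA exu uA uS; rewrite uy' eqxx in uy.
have hA := part3 A dUT; rewrite -/W in hA.
have hS := part3 S dUT; rewrite -/W in hS.
have hB := part3 B dUT; rewrite -/W in hB.
have hT := part3 T' dAS; rewrite -/B (setIC T' A) (setIC T' S) (setIC T' B) in hT.
have hW := part3 W dAS; rewrite -/B (setIC W A) (setIC W S) (setIC W B) in hW.
have au1 : 0 < #|A :&: U| by apply/card_gt0P; exists x; rewrite inE xA xU.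

have C1 : 0 < #|B :&: W| -> k <= #|S :&: W| + #|B :&: T'| + #|S :&: T'|.
  move=> /card_gt0P [w0 w0R].
  apply: leq_trans (card3 _ _ _).
  apply: (kc_bound (z := x) kcon w0R).
  - by rewrite !inE xA.
  - by rewrite !inE xA (negbTE xS) (negbTE xT) xU.
  move=> a b; rewrite !inE !negb_or => /andP [/andP [aA aS] /andP [aU aT]] bR eab.
  have bA : b \notin A.
    apply/negP => bA; have [ay _] := side_nbB se sA aA aS eab bA.
    by move: yUT; rewrite -ay (negbTE aU) (negbTE aT).
  have bU : b \notin U.
    apply/negP => bU; have [az _] := side_nbB se sU aU aT eab bU.
    by move: zAS; rewrite -az (negbTE aA) (negbTE aS).
  by move: bR; rewrite (negbTE bA) (negbTE bU); case: (b \in S); case: (b \in T').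
have C2 : #|S :&: U| + #|A :&: T'| + #|S :&: T'| + 1 <= k.-1 -> #|A| <= #|A :&: U|.
  move=> H; apply: (min x y _ ((S :&: U) :|: (A :&: T') :|: (S :&: T') :|: [set z]) xK yK exy).
  split.
  - by rewrite inE xA xU.
  - by rewrite inE (negbTE yA).
  - by rewrite !inE (negbTE yS) (negbTE yA) eq_sym (negbTE zy).
  - by apply: leq_trans H; apply: leq_trans (card4 _ _ _ _) _; rewrite cards1.
  move=> a b; rewrite !inE => /andP [aA aU] bR eab.
  case: (boolP ((a == x) && (b == y))) => [/andP [/eqP -> /eqP ->]|nxy]; first by right.
  left.
  have bAS : (b \in A) || (b \in S).
    apply/negPn/negP; rewrite negb_or => /andP [bA bS].
    by have [ax bY] := side_nbA sA aA eab bA bS; rewrite ax bY !eqxx in nxy.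
  case: (boolP (b == z)) => [/eqP ->|bz]; first by apply/orP; right; apply/eqP.
  have bUT : (b \in U) || (b \in T').
    apply/negPn/negP; rewrite negb_or => /andP [bU bT].
    by have [_ bz'] := side_nbA sU aU eab bU bT; rewrite bz' eqxx in bz.
  move: bR bAS bUT; rewrite orbF.
  by case: (b \in A); case: (b \in S); case: (b \in U); case: (b \in T').

have edge3 : forall a b, a \in A :&: W -> b \notin A :&: W -> e a b ->
    b \in (S :&: W) :|: (A :&: T') :|: (S :&: T') \/ (a = z /\ b = x).
  move=> a b; rewrite !inE !negb_or => /andP [aA /andP [aU aT]] bR eab.
  case: (boolP ((a == z) && (b == x))) => [/andP [/eqP -> /eqP ->]|nzx]; first by right.
  left.
  have bAS : (b \in A) || (b \in S).
    apply/negPn/negP; rewrite negb_or => /andP [bA bS].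
    have [ax _] := side_nbA sA aA eab bA bS.
    by move: aU; rewrite ax xU.
  have bU : b \notin U.
    apply/negP => bU; have [az bx] := side_nbB se sU aU aT eab bU.
    by rewrite az bx !eqxx in nzx.
  move: bR bAS; rewrite (negbTE bU) /=.
  by case: (b \in A); case: (b \in S); case: (b \in T').
have C3 : 0 < #|A :&: W| -> k <= #|S :&: W| + #|A :&: T'| + #|S :&: T'|.
  move=> /card_gt0P [w0 w0R].
  apply: leq_trans (card3 _ _ _).
  case/orP: zAS => [zA|zS].
    rewrite leqNgt; apply/negP => H.
    have : #|A| <= #|A :&: W|.
      apply: (min z x _ ((S :&: W) :|: (A :&: T') :|: (S :&: T')) zK xK); first by rewrite se.
      split.
      - by rewrite inE zA zW.
      - by rewrite !inE xU /= andbF.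
      - by rewrite !inE xA (negbTE xS) (negbTE xT) xU.
      - by move: H; case: (k) => //.
      - exact: edge3.
    by rewrite hA; move: au1; clear; lia.
  apply: (kc_bound (z := x) kcon w0R).
  - by rewrite !inE xU /= andbF.
  - by rewrite !inE xA (negbTE xS) (negbTE xT) xU.
  move=> a b aR bR eab; case: (edge3 a b aR bR eab) => // [[az _]].
  by move: aR; rewrite inE az => /andP [/dAS]; rewrite zS.
have C4 : 0 < #|B :&: U| -> k <= #|S :&: U| + #|B :&: T'| + #|S :&: T'| + 1.
  move=> /card_gt0P [w0 w0R].
  have H4 := card4 (S :&: U) (B :&: T') (S :&: T') [set x]; rewrite cards1 in H4.
  apply: (leq_trans _ H4).
  apply: (kc_bound (z := z) kcon w0R).
  - by rewrite !inE (negbTE zU) andbF.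
  - by rewrite !inE (negbTE zU) (negbTE zT) (negbTE zx) !andbF.
  move=> a b; rewrite !inE !negb_or => /andP [/andP [aA aS] aU] bR eab.
  case: (boolP (b == x)) => [/eqP ->|bx]; first by apply/orP; right; apply/eqP.
  have bA : b \notin A.
    apply/negP => bA; have [_ bx'] := side_nbB se sA aA aS eab bA.
    by rewrite bx' eqxx in bx.
  have bUT : (b \in U) || (b \in T').
    apply/negPn/negP; rewrite negb_or => /andP [bU bT].
    have [ax _] := side_nbA sU aU eab bU bT.
    by move: aA; rewrite ax xA.
  move: bR bUT; rewrite (negbTE bA) /=.
  by case: (b \in S); case: (b \in U); case: (b \in T').

have C5 : #|A :&: T'| + #|A :&: W| = 0 -> False.
  move=> H.
  have aT0 : A :&: T' = set0 by apply/eqP; rewrite -cards_eq0; move: H; clear; lia.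
  have aW0 : A :&: W = set0 by apply/eqP; rewrite -cards_eq0; move: H; clear; lia.
  have AU : forall v, v \in A -> v \in U.
    move=> v vA; apply/negPn/negP => vU.
    case: (boolP (v \in T')) => vT.
      by move/setP: aT0 => /(_ v); rewrite !inE vA vT.
    by move/setP: aW0 => /(_ v); rewrite !inE vA (negbTE vU) (negbTE vT).
  case/orP: zAS => [zA|zS]; first by move: (AU z zA); rewrite (negbTE zU).
  have sw1 : 0 < #|S :&: W| by apply/card_gt0P; exists z; rewrite inE zS zW.
  have H5 := card3 (S :&: U) (S :&: T') [set x]; rewrite cards1 in H5.
  have : k <= #|(S :&: U) :|: (S :&: T') :|: [set x]|.
    apply: (kc_bound (w := y) (R := W :|: B) (z := a0) kcon).
    - by rewrite inE yB orbT.
    - by rewrite !inE (AU a0 a0A) a0A.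
    - by rewrite !inE (negbTE (dAS a0 a0A)) (negbTE a0x).
    move=> a b; rewrite !inE !negb_or => aR bR eab.
    case: (boolP (b \in S)) => bS.
      by move: bR; rewrite bS /=; case: (b \in U); case: (b \in T').
    case: (boolP (b \in A)) => bA; last by move: bR; rewrite (negbTE bA) (negbTE bS) /= andbF.
    apply/orP; right; apply/eqP.
    case/orP: aR => /andP [aX aY].
      by have [_ ->] := side_nbB se sU aX aY eab (AU b bA).
    by have [_ ->] := side_nbB se sA aX aY eab bA.
  by move: H5 hS cS sw1 k0; clear; lia.
have G2 : k <= #|S :&: U| + #|A :&: T'| + #|S :&: T'| + 1.
  rewrite leqNgt; apply/negP => H; apply: C5.
  have : #|A| <= #|A :&: U| by apply: C2; move: H; clear; lia.
  by move: hA; clear; lia.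
apply: (arith_final k0 cS cT hA hS hB hT hW FAB FAW au1 G2 C1 C3 C4).
move=> aw0; case/orP: zAS => [zA|zS].
  by move: aw0 => /eqP; rewrite cards_eq0 => /eqP/setP/(_ z); rewrite in_setI zA zW in_set0.
by apply/card_gt0P; exists z; rewrite inE zS zW.
Qed.



Lemma card_set_sum (T : finType) (K : {set T}) (P : pred T) :
  #|[set u in K | P u]| = \sum_(u in K) (P u : nat).
Proof.
rewrite -sum1_card (eq_bigl (fun u => (u \in K) && P u)); last by move=> u; rewrite inE.
by rewrite big_mkcondr /=; apply: eq_bigr => u _; case: (P u).
Qed.

Lemma sum_D1 (T : finType) (F : T -> nat) (S : {set T}) v : v \notin S ->
  \sum_(a in ~: S) F a = F v + \sum_(a in ~: (v |: S)) F a.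
Proof.
move=> vS; rewrite (bigD1 v) ?inE //; congr (_ + _); apply: eq_bigl => a.
by rewrite !inE negb_or andbC.
Qed.

Definition compf (T : finType) (e : rel T) (S : {set T}) x := [set y | connect (del_vertices e S) x y].

Lemma nc_imset (T : finType) (e : rel T) S :
  num_components e S = #|[set compf e S x | x in ~: S]|.
Proof.
rewrite /num_components; apply: eq_card => C; rewrite inE.
apply/existsP/imsetP => [[x /andP [xS /eqP ->]]|[x xS ->]]; exists x => //.
  by rewrite inE.
by move: xS; rewrite inE => ->; rewrite /compf eqxx.
Qed.

Lemma compf_eq (T : finType) (e : rel T) S a b : symmetric e ->
  connect (del_vertices e S) a b -> compf e S a = compf e S b.
Proof.
move=> se ab; have sy : connect_sym (del_vertices e S) by apply/sym_connect_sym/sym_dv.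
apply/setP => y; rewrite !inE; apply/idP/idP => H.
  by apply: connect_trans H; rewrite sy.
exact: connect_trans H.
Qed.

Lemma connect_mono (T : finType) (e : rel T) (S S' : {set T}) a b : S \subset S' ->
  connect (del_vertices e S') a b -> connect (del_vertices e S) a b.
Proof.
move=> sub; apply: connect_sub => c d /and3P [cS dS ecd]; apply: connect1.
apply/and3P; split => //; apply/negP => H; move/subsetP: sub => /(_ _ H).
  by rewrite (negbTE cS).
by rewrite (negbTE dS).
Qed.

Lemma comp_factor (T : finType) (e : rel T) (S S' : {set T}) (D : {set T}) : symmetric e ->
  S \subset S' ->
  #|[set compf e S x | x in D]| <= #|[set compf e S' x | x in D]|.
Proof.
move=> se sub.
pose phi C := if [pick x in D | compf e S' x == C] is Some x then compf e S x else set0.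
have -> : [set compf e S x | x in D] = [set phi C | C in [set compf e S' x | x in D]].
  rewrite -imset_comp; apply: eq_in_imset => x xD /=; rewrite /phi.
  case: pickP => [x' /andP [x'D /eqP Ex]|H]; last by move: (H x); rewrite xD eqxx.
  symmetry; apply: compf_eq => //; apply: (connect_mono sub).
  have : x \in compf e S' x by rewrite /compf inE connect0.
  by rewrite -Ex /compf inE.
exact: leq_imset_card.
Qed.

Lemma forest_count (T : finType) (e : rel T) (S : {set T}) : symmetric e -> irreflexive e ->
  (forall K : {set T}, K \subset ~: S -> K != set0 ->
     exists2 v, v \in K & \sum_(u in K) (e v u : nat) <= 1) ->
  \sum_(a in ~: S) \sum_(b in ~: S) (e a b : nat) + 2 * num_components e S <= 2 * #|~: S|.
Proof.
move=> se ie; have [n le] := ubnP #|~: S|; elim: n S le => // n IH S; rewrite ltnS => le H.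
case: (set_0Vmem (~: S)) => [D0|[v0 v0D]].
  by rewrite nc_imset D0 imset0 cards0 big_set0.
have [v vD dv] : exists2 v, v \in ~: S & \sum_(u in ~: S) (e v u : nat) <= 1.
  by apply: H (subxx _) _; apply/set0Pn; exists v0.
have vS : v \notin S by move: vD; rewrite inE.
set S' := v |: S.
have cD : #|~: S| = #|~: S'|.+1.
  rewrite (cardsD1 v (~: S)) vD add1n; congr _.+1; apply: eq_card => a.
  by rewrite !inE negb_or.
have IH' : \sum_(a in ~: S') \sum_(b in ~: S') (e a b : nat) + 2 * num_components e S' <= 2 * #|~: S'|.
  apply: IH; first by move: le; rewrite cD.
  move=> K KS K0; apply: H K0; apply: subset_trans KS _.
  by apply/subsetP => a; rewrite !inE negb_or => /andP [_ ->].
set d := \sum_(b in ~: S') (e v b : nat).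
have dle : d <= 1 by move: dv; rewrite (sum_D1 _ vS) ie.
have Esum : \sum_(a in ~: S) \sum_(b in ~: S) (e a b : nat) =
    d + d + \sum_(a in ~: S') \sum_(b in ~: S') (e a b : nat).
  rewrite (sum_D1 _ vS) (sum_D1 (fun b => (e v b : nat)) vS) ie add0n -/S' -/d.
  rewrite (eq_bigr (fun a => (e a v : nat) + \sum_(b in ~: S') (e a b : nat))); last first.
    by move=> a _; rewrite (sum_D1 (fun b => (e a b : nat)) vS).
  rewrite big_split /= addnA; congr (_ + _ + _).
  by rewrite /d; apply: eq_bigr => a _; rewrite se.
have Ec : num_components e S + d <= num_components e S' + 1.
  rewrite !nc_imset.
  have D_eq : ~: S = v |: ~: S'.
    apply/setP => a; rewrite !inE negb_or.
    by case: (eqVneq a v) => [->|] /=; rewrite ?vS.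
  have cf := @comp_factor _ e S S' (~: S') se (subsetUr _ _).
  rewrite D_eq imsetU1 cardsU1.
  case: (posnP d) => [d0|d1].
    by rewrite d0; move: cf; clear; case: (_ \notin _) => /=; lia.
  have [w wD evw] : exists2 w, w \in ~: S' & e v w.
    move: d1; rewrite /d -card_set_sum card_gt0 => /set0Pn [w]; rewrite inE => /andP [wD evw].
    by exists w.
  have -> : compf e S v \in [set compf e S x | x in ~: S'].
    apply/imsetP; exists w => //; apply: compf_eq => //; apply: connect1.
    apply/and3P; split => //; move: wD; rewrite !inE negb_or => /andP [_ ->] //.
  by move: cf dle; clear; rewrite /=; lia.
rewrite Esum cD; move: IH' Ec dle; clear; lia.
Qed.


Lemma arith_main k V F n NinV NoutV NinF opF DegF c E m :
 1 <= k -> k * V = NinV + NoutV -> NoutV = NinF -> DegF = NinF + opF ->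
 k.+1 * F + m <= DegF -> opF + 2 * c <= 2 * F -> 2 * E <= NinV -> V + F = n ->
 (k - 1) * n + 2 * (c + E) + m <= (2 * k - 1) * V.
Proof. move=> *; nia. Qed.

Lemma mader (T : finType) (e : rel T) k (K : {set T}) :
  simple_graph e -> 0 < k -> minimally_k_connected e k ->
  (forall v, v \in K -> k < deg e v) ->
  (forall v, v \in K -> 1 < #|[set u in K | e v u]|) -> forall v, v \in K -> False.
Proof.
move=> sg k0 mk degK nbK v vK.
have kcon := mk.1.
have hside := fun u w (euw : e u w) => side_exists_norm sg mk euw.
suff H : forall n x y (A S : {set T}), #|A| <= n -> x \in K -> y \in K -> e x y -> sidep e k x y A S -> False.
  have : 0 < #|[set u in K | e v u]| by apply: leq_trans (nbK v vK).
  rewrite card_gt0 => /set0Pn [y]; rewrite inE => /andP [yK evy].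
  have [A [S sA]] := side_exists sg mk evy.
  exact: (H #|A| v y A S (leqnn _) vK yK evy sA).
elim=> [|n IH] x y A S hA xK yK exy sA.
  by case: sA => xA _ _ _ _; move: hA; rewrite leqn0 cards_eq0 => /eqP A0; move: xA; rewrite A0 inE.
apply: (mader_core sg k0 kcon hside degK nbK _ xK yK exy (side_norm sA)).
  move=> x' y' A' S' x'K y'K e' s'; rewrite leqNgt; apply/negP => lt.
  by apply: (IH x' y' A' S' _ x'K y'K e' s'); move: lt hA; clear; lia.
by move=> w wA; rewrite inE wA.
Qed.


Lemma deg_split (T : finType) (e : rel T) (X : {set T}) v :
  deg e v = \sum_(u in X) (e v u : nat) + \sum_(u in ~: X) (e v u : nat).
Proof.
rewrite -!card_set_sum /deg.
have := cardsID X [set u | e v u] => <-.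
by congr (_ + _); apply: eq_card => u; rewrite !inE andbC.
Qed.

Lemma dcount (T : finType) (e : rel T) (X Y : {set T}) : symmetric e ->
  \sum_(a in X) \sum_(b in Y) (e a b : nat) = \sum_(b in Y) \sum_(a in X) (e b a : nat).
Proof.
move=> se; rewrite exchange_big; apply: eq_bigr => b _; apply: eq_bigr => a _.
by rewrite se.
Qed.

Lemma edge_count (T : finType) (e : rel T) k : symmetric e -> irreflexive e ->
  2 * #|Edeg e k| <= \sum_(a in Vdeg e k) \sum_(b in Vdeg e k) (e a b : nat).
Proof.
move=> se ie; set X := Vdeg e k.
rewrite pair_big /=.
have -> : \sum_(p | (p.1 \in X) && (p.2 \in X)) (e p.1 p.2 : nat) =
          \sum_(p | [&& p.1 \in X, p.2 \in X & e p.1 p.2]) 1.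
  rewrite big_mkcond [RHS]big_mkcond; apply: eq_bigr => p _.
  by case: (p.1 \in X); case: (p.2 \in X); case: (e p.1 p.2).
rewrite (partition_big (fun p => [set p.1; p.2]) (mem (Edeg e k))) /=; last first.
  move=> [u v] /= /and3P [uX vX euv]; rewrite inE.
  by apply/existsP; exists u; apply/existsP; exists v; rewrite uX vX euv eqxx.
rewrite mulnC -sum_nat_const; apply: leq_sum => C.
rewrite inE => /existsP [u /existsP [v /and4P [uX vX euv /eqP ->]]].
have uv : u != v by apply/eqP => uv; rewrite uv ie in euv.
rewrite (bigD1 (u, v)) /=; last by rewrite uX vX euv eqxx.
rewrite (bigD1 (v, u)) /=; last first.
  by rewrite vX uX se euv setUC eqxx /= xpair_eqE negb_and eq_sym uv.
by rewrite addnA leq_addr.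
Qed.


Unset Implicit Arguments.

Theorem mainTheorem1 (T : finType) (e : rel T) (k : nat) :
  simple_graph e -> 1 <= k -> minimally_k_connected e k ->
  ((((k - 1) * #|T| + 2 * (num_components e (Vdeg e k) + #|Edeg e k|))%:R
      + Num.max 0 ((max_deg e)%:R - (k + 1)%:R)) / (2 * k - 1)%:R
   <= (#|Vdeg e k|%:R : rat))%R.
Proof.
move=> sg k1 mk.
have [se ie] := sg.
have kcon := mk.1.
have [kn _] := kcon.
set V := Vdeg e k.
have mindeg : forall v, k <= deg e v.
  move=> v; case: (boolP [exists w, (w != v) && ~~ e v w]) => [/existsP [w /andP [wv nevw]]|/existsPn H].
    apply: (kc_bound (R := [set v]) (N := [set u | e v u]) (w := v) (z := w) kcon).
    - by rewrite inE.
    - by rewrite inE.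
    - by rewrite inE.
    by move=> a b; rewrite !inE => /eqP -> _ evb.
  have : #|[set: T]| <= #|v |: [set u | e v u]|.
    apply: subset_leq_card; apply/subsetP => w _; rewrite !inE.
    by case: (eqVneq w v) => //= wv; move: (H w); rewrite wv /= negbK.
  by rewrite cardsT cardsU1 /deg; move: kn; clear; case: (_ \notin _) => /=; lia.
have degF : forall v, v \in ~: V -> k < deg e v.
  by move=> v; rewrite !inE ltn_neqAle mindeg andbT eq_sym.
have forest : forall K : {set T}, K \subset ~: V -> K != set0 ->
    exists2 v, v \in K & \sum_(u in K) (e v u : nat) <= 1.
  move=> K KV /set0Pn [v0 v0K].
  case: (boolP [exists v, (v \in K) && (\sum_(u in K) (e v u : nat) <= 1)]).
    by move=> /existsP [v /andP [vK h]]; exists v.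
  move=> /existsPn H; exfalso.
  apply: (mader (K := K) sg k1 mk _ _ v0K).
    by move=> v vK; apply: degF; move/subsetP: KV; apply.
  by move=> v vK; rewrite card_set_sum ltnNge; move: (H v); rewrite vK.
have H5 := forest_count se ie forest.
have h1 : k * #|V| = \sum_(a in V) \sum_(b in V) (e a b : nat) + \sum_(a in V) \sum_(b in ~: V) (e a b : nat).
  rewrite -big_split /= mulnC -sum_nat_const; apply: eq_bigr => a aV.
  by rewrite -deg_split; move: aV; rewrite inE => /eqP.
have h2 := dcount V (~: V) se.
have h3 : \sum_(a in ~: V) deg e a = \sum_(a in ~: V) \sum_(b in V) (e a b : nat) + \sum_(a in ~: V) \sum_(b in ~: V) (e a b : nat).
  by rewrite -big_split /=; apply: eq_bigr => a _; rewrite -deg_split.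
have h4 : k.+1 * #|~: V| + (max_deg e - k.+1) <= \sum_(a in ~: V) deg e a.
  rewrite (eq_bigr (fun a => k.+1 + (deg e a - k.+1))); last first.
    by move=> a aF; rewrite subnKC // degF.
  rewrite big_split /= sum_nat_const mulnC leq_add2l.
  case: (posnP (max_deg e - k.+1)) => [->|hm] //.
  have [w Hw] := @bigop.eq_bigmax T (fun v => deg e v) (leq_ltn_trans (leq0n k) kn).
  have wF : w \in ~: V.
    rewrite !inE; apply/eqP => dw; move: hm; rewrite /max_deg Hw dw; clear; lia.
  by rewrite (bigD1 w) //= /max_deg Hw leq_addr.
have h7 := @edge_count T e k se ie.
have h8 := cardsC V.
have := arith_main k1 h1 h2 h3 h4 H5 h7 h8.
rewrite -/V => Hnat.
have Hm : (Num.max 0 ((max_deg e)%:R - (k + 1)%:R) = ((max_deg e - (k + 1))%:R : rat))%R.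
  case: (leqP (max_deg e) (k + 1)) => h.
    rewrite (_ : max_deg e - (k + 1) = 0); last by apply/eqP; rewrite subn_eq0.
    by rewrite max_l // subr_le0 ler_nat.
  by rewrite natrB ?(ltnW h) // max_r // subr_ge0 ler_nat ltnW.
rewrite Hm -natrD ler_pdivrMr ?ltr0n; last by move: k1; clear; lia.
rewrite -natrM ler_nat [#|V| * _]mulnC addn1.
exact: Hnat.
Qed.
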